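(* Let $n \geq 2$ and let $\mathbb{F}_q$ be a finite field. Every nonzero element of $\operatorname{Mat}_n(\mathbb{F}_q)$ can be written as a sum of two matrices in $\operatorname{SL}_n(\mathbb{F}_q)$. If $n$ is even or $\operatorname{char}(\mathbb{F}_q) = 2$, then the zero matrix can be written as a sum of two matrices in $\operatorname{SL}_n(\mathbb{F}_q)$; otherwise the zero matrix cannot be written as a sum of two matrices in $\operatorname{SL}_n(\mathbb{F}_q)$ but can be written as a sum of three.
   Context: $\operatorname{SL}_n(\mathbb{F}_q)$ is the set of $n\times n$ matrices over $\mathbb{F}_q$ of determinant $1$. *)

(* Defs.v *)
From HB Require Import structures.
From mathcomp Require Import all_boot all_order all_algebra all_field.
Set Implicit Arguments. Unset Strict Implicit. Unset Printing Implicit Defensive.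
Import GRing.Theory.
Local Open Scope ring_scope.

Definition inSL (F : fieldType) (n : nat) (A : 'M[F]_n) : Prop := \det A = 1.

(* Main.v *)
Require Import Defs.
From HB Require Import structures.
From mathcomp Require Import all_boot all_order all_algebra all_fingroup all_field ring.
Import GRing.Theory.
Local Open Scope ring_scope.

Lemma det2 (R : comNzRingType) (f : nat -> nat -> R) :
  \det (\matrix_(i < 2, j < 2) f i j) = f 0 0 * f 1 1 - f 0 1 * f 1 0.
Proof.
rewrite (expand_det_row _ 0) !big_ord_recl big_ord0 addr0 /cofactor !det_mx11 !mxE /= /bump /=.
rewrite expr0 expr1 !mul1r mulN1r mulrN //.
Qed.
Definition diagP (R : nzRingType) n (M : 'M[R]_n) := forall i j : 'I_n, i != j -> M i j = 0.
Arguments diagP {R n}.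

Lemma base2 (F : fieldType) (t : F) (M : 'M[F]_2) : diagP M ->
  exists X Y : 'M[F]_2, \det X = t /\ \det Y = t /\ M = X + Y.
Proof.
move=> dM.
pose sX := [:: [:: 0; 1]; [:: -t; M 1 1]].
pose sY := [:: [:: M 0 0; -1]; [:: t; 0]].
exists (\matrix_(i<2,j<2) (nth 0 (nth [::] sX i) j)).
exists (\matrix_(i<2,j<2) (nth 0 (nth [::] sY i) j)).
rewrite (det2 _ (fun i j => nth 0 (nth [::] sX i) j)) (det2 _ (fun i j => nth 0 (nth [::] sY i) j)) /=; split; first by ring.
split; first by ring.
apply/matrixP => i j; rewrite !mxE.
case: i => [[|[|i]] Hi] //; case: j => [[|[|j]] Hj] //=;
  rewrite ?addr0 ?add0r ?subrr ?addNr ?addrN //;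
  first [by congr (M _ _); apply: val_inj | by rewrite dM].
Qed.

Lemma det3 (R : comNzRingType) (f : nat -> nat -> R) :
  \det (\matrix_(i < 3, j < 3) f i j) =
   f 0 0 * (f 1 1 * f 2 2 - f 1 2 * f 2 1)
 - f 0 1 * (f 1 0 * f 2 2 - f 1 2 * f 2 0)
 + f 0 2 * (f 1 0 * f 2 1 - f 1 1 * f 2 0).
Proof.
rewrite (expand_det_row _ 0) !big_ord_recl big_ord0 addr0 /cofactor /=.
rewrite !(expand_det_row _ 0) !big_ord_recl !big_ord0 /cofactor !det_mx11 /= !mxE /= /bump /=.
rewrite !addr0 !(add0n, addn0, addn1, add1n) /= !expr0 expr1 expr2.
ring.
Qed.

Lemma base3 (F : fieldType) (t : F) (M : 'M[F]_3) : diagP M -> M 2 2 != 0 ->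
  exists X Y : 'M[F]_3, \det X = t /\ \det Y = t /\ M = X + Y.
Proof.
move=> dM u0.
pose u := M 2 2.
pose c1 := 2 * t / u.
pose sX := [:: [:: M 0 0 - c1; 1; 0]; [:: 0; M 1 1 - 1; 1]; [:: t; 0; 0]].
pose sY := [:: [:: c1; -1; 0]; [:: 0; 1; -1]; [:: -t; 0; u]].
exists (\matrix_(i<3,j<3) (nth 0 (nth [::] sX i) j)).
exists (\matrix_(i<3,j<3) (nth 0 (nth [::] sY i) j)).
rewrite (det3 _ (fun i j => nth 0 (nth [::] sX i) j)) (det3 _ (fun i j => nth 0 (nth [::] sY i) j)) /=.
split; first by ring.
split; first by rewrite /c1; field.
apply/matrixP => i j; rewrite !mxE.
case: i => [[|[|[|i]]] Hi] //; case: j => [[|[|[|j]]] Hj] //=;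
  rewrite ?addr0 ?add0r ?subrr ?addNr ?addrN ?subrK //;
  first [by congr (M _ _); apply: val_inj | by rewrite dM].
Qed.
Lemma key (F : fieldType) k : forall (t : F) (M : 'M[F]_k.+2), diagP M ->
  M ord_max ord_max != 0 ->
  exists X Y : 'M[F]_k.+2, \det X = t /\ \det Y = t /\ M = X + Y.
Proof.
elim/ltn_ind: k => -[|[|k]] IH t M dM Mn0.
- exact: base2.
- apply: base3 => //; by have -> : (2 : 'I_3) = ord_max by apply: val_inj.
pose M2 : 'M[F]_(2 + k.+2) := M.
have ur0 : ursubmx M2 = 0.
  apply/matrixP => i j; rewrite !mxE; apply: dM.
  apply/eqP => /(congr1 val) /= E; have := ltn_ord i.
  by rewrite E ltnNge leq_addr.
have dl0 : dlsubmx M2 = 0.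
  apply/matrixP => i j; rewrite !mxE; apply: dM.
  apply/eqP => /(congr1 val) /= E; have := ltn_ord j.
  by rewrite -E ltnNge leq_addr.
have dul : diagP (ulsubmx M2).
  by move=> i j ij; rewrite !mxE; apply: dM; apply: contra ij => /eqP E; apply/eqP; apply/val_inj; exact: (congr1 val E).
have ddr : diagP (drsubmx M2).
  by move=> i j ij; rewrite !mxE; apply: dM; apply: contra ij => /eqP E; apply/eqP; apply/val_inj; move/(congr1 val): E => /= /eqP; rewrite eqn_add2l => /eqP.
have rm : rshift 2 (ord_max : 'I_k.+2) = ord_max :> 'I_(2 + k.+2) by apply: val_inj.
have drn : drsubmx M2 ord_max ord_max != 0 by rewrite !mxE rm.
have [X1 [Y1 [dX1 [dY1 E1]]]] := @base2 _ t _ dul.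
have [X2 [Y2 [dX2 [dY2 E2]]]] := IH k (leqnSn _ ) 1 _ ddr drn.
exists (block_mx X1 0 0 X2), (block_mx Y1 0 0 Y2).
split; first by have := det_ublock X1 0 X2; rewrite dX1 dX2 mulr1 => H; exact: H.
split; first by have := det_ublock Y1 0 Y2; rewrite dY1 dY2 mulr1 => H; exact: H.
have H := add_block_mx X1 0 0 X2 Y1 0 0 Y2.
rewrite !addr0 -E1 -E2 in H.
have H2 : M2 = block_mx (ulsubmx M2) 0 0 (drsubmx M2) by rewrite -ur0 -dl0 submxK.
exact (etrans H2 (esym H)).
Qed.

Lemma part1 (F : fieldType) m (A : 'M[F]_m.+2) : A != 0 ->
  exists B C : 'M[F]_m.+2, \det B = 1 /\ \det C = 1 /\ A = B + C.
Proof.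
move=> A0.
have r0 : (0 < \rank A)%N by rewrite lt0n mxrank_eq0.
set r := \rank A in r0.
set G := col_ebase A; set H := row_ebase A.
have dG : \det G != 0 by rewrite -unitfE -unitmxE col_ebase_unit.
have dH : \det H != 0 by rewrite -unitfE -unitmxE row_ebase_unit.
pose s := tperm (0 : 'I_m.+2) ord_max.
pose T : 'M[F]_m.+2 := perm_mx s.
have TT : T *m T = 1%:M by rewrite -perm_mxM tperm2 perm_mx1.
have dT : \det T != 0.
  apply/eqP => E; have := congr1 determinant TT.
  by rewrite det_mulmx E mul0r det1 => /eqP; rewrite eq_sym oner_eq0.
pose D := T *m pid_mx r *m T.
have DE : forall i j, D i j = pid_mx r (s i) (s j) :> F.
  move=> i j; rewrite /D /T -row_permE.
  have -> : perm_mx s = perm_mx s^-1^-1 :> 'M[F]_m.+2 by rewrite invgK.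
  by rewrite -col_permE !mxE tpermV.
have dD : diagP D.
  move=> i j ij; rewrite DE mxE (_ : (s i == s j :> nat) = false) //.
  by apply/negbTE; rewrite val_eqE (inj_eq perm_inj).
have Dn0 : D ord_max ord_max != 0.
  by rewrite DE mxE tpermR eqxx r0 /= oner_neq0.
have AE : A = (G *m T) *m D *m (T *m H).
  rewrite /D !mulmxA -[G *m T *m T]mulmxA TT mulmx1.
  by rewrite -[_ *m T *m T]mulmxA TT mulmx1 mulmx_ebase.
have [X [Y [dX [dY E]]]] := @key _ _ ((\det (G *m T) * \det (T *m H))^-1) _ dD Dn0.
exists (G *m T *m X *m (T *m H)), (G *m T *m Y *m (T *m H)).
split; first by rewrite !det_mulmx dX !det_mulmx; field; rewrite ?dG ?dT ?dH.
split; first by rewrite !det_mulmx dY !det_mulmx; field; rewrite ?dG ?dT ?dH.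
by rewrite AE E mulmxDr mulmxDl.
Qed.

Theorem theorem3p10 (F : finFieldType) (n : nat) (hn : (2 <= n)%N) :
  (forall A : 'M[F]_n, A != 0 ->
     exists B C : 'M[F]_n, inSL B /\ inSL C /\ A = B + C) /\
  ((~~ odd n \/ (2 \in [pchar F])%N) ->
     exists B C : 'M[F]_n, inSL B /\ inSL C /\ (0 : 'M[F]_n) = B + C) /\
  ((odd n /\ (2 \notin [pchar F])%N) ->
     (~ exists B C : 'M[F]_n, inSL B /\ inSL C /\ (0 : 'M[F]_n) = B + C) /\
     (exists B C D : 'M[F]_n, [/\ inSL B, inSL C, inSL D &
        (0 : 'M[F]_n) = B + C + D])).
Proof.
have P1 : forall A : 'M[F]_n, A != 0 ->
     exists B C : 'M[F]_n, inSL B /\ inSL C /\ A = B + C.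
  case: n hn => [|[|m]] // _ A A0.
  have [B [C [dB [dC E]]]] := @part1 _ _ A A0.
  by exists B, C.
have dN1 : \det (- 1%:M : 'M[F]_n) = (-1) ^+ odd n.
  by rewrite -scaleN1r detZ det1 mulr1 signr_odd.
split => //; split.
  move=> h; exists 1%:M, (- 1%:M); rewrite /inSL det1 dN1; split => //.
  split; last by rewrite addrN.
  case: h => [/negbTE -> | h2]; first by rewrite expr0.
  by rewrite (oppr_pchar2 h2) expr1n.
move=> [hodd h2]; split.
  move=> [B [C [dB [dC E]]]].
  have EB : B = - C by apply/eqP; rewrite -addr_eq0 -E.
  move: dB; rewrite /inSL EB -scaleN1r detZ dC mulr1 -signr_odd hodd expr1 => h.
  move: h2; rewrite inE /= => /negP; apply.
  by rewrite -[2%:R]/(1 + 1 : F) -{1}h addNr.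
have Nz : (- 1%:M : 'M[F]_n) != 0.
  case: n hn {P1 dN1 hodd} => [|m] // _.
  apply/eqP => /matrixP /(_ 0 0); rewrite !mxE /= => /eqP.
  by rewrite oppr_eq0 oner_eq0.
have [C [D [dC [dD E]]]] := P1 _ Nz.
exists 1%:M, C, D; split => //; first by rewrite /inSL det1.
by rewrite -addrA -E addrN.
Qed.
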